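(* Assume $f$ has a unique global maximizer, contains no weak epistasis, and every order-1 epistasis of $f$ is strict. If the maximum in-degree of the epistatic graph is $k$, then every strongly connected component of the epistatic graph has size at most $k+1$, and consequently the decomposition difficulty is at most $k+1$.
   Context: Fix $\ell\ge1$, loci $V=\{0,\dots,\ell-1\}$, chromosomes $\vec y\in\{0,1\}^V$, fitness $f:\{0,1\}^V\to\mathbb R$ (maximized) with unique global maximizer $g$. An assignment $A$ is a set of pairs $(v,a)$ with at most one pair per locus; coverage $\mathcal C(A)$; $A[v]$ its allele at $v$. $\Psi_A$ is the set of chromosomes agreeing with $A$ on $\mathcal C(A)$ with maximum fitness among such chromosomes; $\Psi_A[v]=\{\psi_v:\psi\in\Psi_A\}$. Epistasis: for $v\in V$ and nonempty $S\subseteq V\setminus\{v\}$, $S\Rightarrow v$ iff for every $s\in S$ there exists an assignment $A$ with $\mathcal C(A)=S$ and $\Psi_A[v]\neq\Psi_{A\setminus\{(s,A[s])\}}[v]$. An epistasis $S\Rightarrow v$ with $|S|\ge2$ is weak if no nonempty proper subset $T\subsetneq S$ has $T\Rightarrow v$. An order-1 epistasis $\{u\}\Rightarrow v$ is strict if $\Psi_{\{(u,1-g[u])\}}[v]=\{1-g[v]\}$. The epistatic graph (EG) is the directed graph on $V$ with edge $u\to v$ iff $\{u\}\Rightarrow v$. The decomposition difficulty is $\max(k_{SCC},k_{in}+1)$, where $k_{SCC}$ is the maximum size of a strongly connected component of the EG and $k_{in}$ its maximum in-degree. *)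

(* Defs.v *)
From mathcomp Require Import all_boot all_order all_algebra.
Set Implicit Arguments. Unset Strict Implicit. Unset Printing Implicit Defensive.
Import Order.TTheory GRing.Theory Num.Theory.
Local Open Scope ring_scope.

Section Epistasis.
Variable (ell : nat) (R : realDomainType).

Definition chrom := {ffun 'I_ell -> bool}.
Definition assignment := {ffun 'I_ell -> option bool}.

Definition coverage (A : assignment) : {set 'I_ell} := [set v | A v != None].

Definition agrees (A : assignment) (y : chrom) : bool :=
  [forall v, if A v is Some a then y v == a else true].

Definition Psi (f : chrom -> R) (A : assignment) : {set chrom} :=
  [set y | agrees A y && [forall z : chrom, agrees A z ==> (f z <= f y)]].

Definition PsiAt (f : chrom -> R) (A : assignment) (v : 'I_ell) : {set bool} :=
  [set (y : chrom) v | y in Psi f A].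

Definition remove_locus (A : assignment) (s : 'I_ell) : assignment :=
  [ffun w => if w == s then None else A w].

Definition single (u : 'I_ell) (a : bool) : assignment :=
  [ffun w => if w == u then Some a else None].

Definition epistasis (f : chrom -> R) (S : {set 'I_ell}) (v : 'I_ell) : bool :=
  [&& v \notin S, S != set0 &
   [forall s in S, exists A : assignment,
      (coverage A == S) && (PsiAt f A v != PsiAt f (remove_locus A s) v)]].

Definition weak_epistasis (f : chrom -> R) (S : {set 'I_ell}) (v : 'I_ell) : bool :=
  [&& 2 <= #|S|, epistasis f S v &
   ~~ [exists T : {set 'I_ell}, [&& T != set0, T \proper S & epistasis f T v]]]%N.

Definition no_weak_epistasis (f : chrom -> R) : Prop :=
  forall S v, ~~ weak_epistasis f S v.

Definition unique_global_maximizer (f : chrom -> R) (g : chrom) : Prop :=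
  forall y : chrom, y != g -> f y < f g.

Definition strict_order1 (f : chrom -> R) (g : chrom) (u v : 'I_ell) : Prop :=
  PsiAt f (single u (~~ g u)) v = [set ~~ g v].

Definition all_order1_strict (f : chrom -> R) (g : chrom) : Prop :=
  forall u v, epistasis f [set u] v -> strict_order1 f g u v.

Definition EG (f : chrom -> R) : rel 'I_ell := fun u v => epistasis f [set u] v.

Definition in_degree (f : chrom -> R) (v : 'I_ell) : nat := #|[set u | EG f u v]|.

Definition max_in_degree (f : chrom -> R) : nat := (\max_(v < ell) in_degree f v)%N.

Definition scc (f : chrom -> R) (u : 'I_ell) : {set 'I_ell} :=
  [set w | connect (EG f) u w && connect (EG f) w u].

Definition max_scc_size (f : chrom -> R) : nat := (\max_(u < ell) #|scc f u|)%N.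

Definition decomposition_difficulty (f : chrom -> R) : nat :=
  maxn (max_scc_size f) (max_in_degree f).+1.

End Epistasis.

(* Main.v *)
Require Import Defs.
From mathcomp Require Import all_boot all_order all_algebra.
Import Order.TTheory GRing.Theory Num.Theory.

Section Helpers.
Set Implicit Arguments. Unset Strict Implicit.

Lemma agrees_single ell (u : 'I_ell) a (y : chrom ell) :
  agrees (single u a) y = (y u == a).
Proof.
apply/forallP/eqP.
  by move=> /(_ u); rewrite ffunE eqxx => /eqP.
by move=> Hy v; rewrite ffunE; case: eqP => // ->; rewrite Hy.
Qed.

Lemma Psi_nonempty ell (R : realDomainType) (f : chrom ell -> R) A y0 :
  agrees A y0 -> exists y, y \in Psi f A.
Proof.
move=> Hy0.
case: (@arg_maxP _ _ (chrom ell) y0 (agrees A) f Hy0) => y Hy Hmax.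
exists y; rewrite inE Hy /=; apply/forallP => z; apply/implyP => Hz.
exact: Hmax.
Qed.

Lemma PsiP ell (R : realDomainType) (f : chrom ell -> R) A y :
  reflect (agrees A y /\ forall z, agrees A z -> (f z <= f y)%R) (y \in Psi f A).
Proof.
rewrite inE; apply: (iffP andP) => -[H1 H2]; split => //.
  by move=> z Hz; move/forallP: H2 => /(_ z) /implyP; apply.
by apply/forallP => z; apply/implyP; apply: H2.
Qed.

Definition P ell (R : realDomainType) (f : chrom ell -> R) (g : chrom ell) u :=
  Psi f (single u (~~ g u)).

Lemma P_nonempty ell (R : realDomainType) (f : chrom ell -> R) g u :
  exists y, y \in P f g u.
Proof.
apply: (@Psi_nonempty _ _ f _ [ffun w => if w == u then ~~ g u else g w]).
by rewrite agrees_single ffunE eqxx.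
Qed.

Lemma edge_flip ell (R : realDomainType) (f : chrom ell -> R) g u v y :
  all_order1_strict f g -> EG f u v -> y \in P f g u -> y v = ~~ g v.
Proof.
move=> Hs Huv Hy; have := Hs u v Huv; rewrite /strict_order1 => HP.
have : y v \in PsiAt f (single u (~~ g u)) v by apply/imsetP; exists y.
by rewrite HP inE => /eqP.
Qed.

Lemma edge_le ell (R : realDomainType) (f : chrom ell -> R) g u v y z :
  all_order1_strict f g -> EG f u v -> y \in P f g u -> z \in P f g v ->
  (f y <= f z)%R.
Proof.
move=> Hs Huv Hy /PsiP [_ Hz]; apply: Hz.
by rewrite agrees_single (edge_flip Hs Huv Hy).
Qed.

Lemma connect_le ell (R : realDomainType) (f : chrom ell -> R) g a b y z :
  all_order1_strict f g -> connect (EG f) a b -> y \in P f g a -> z \in P f g b ->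
  (f y <= f z)%R.
Proof.
move=> Hs /connectP [p Hp ->] {b}.
elim: p a y Hp => [|c p IH] a y /=.
  by move=> _ Hy /PsiP [_ Hz]; apply: Hz; move/PsiP: Hy => [].
move=> /andP [Hac Hp] Hy Hz.
have [w Hw] := P_nonempty f g c.
apply: le_trans (edge_le Hs Hac Hy Hw) _.
exact: IH Hp Hw Hz.
Qed.

Lemma edge_sub ell (R : realDomainType) (f : chrom ell -> R) g u v :
  all_order1_strict f g -> EG f u v -> connect (EG f) v u ->
  {subset P f g u <= P f g v}.
Proof.
move=> Hs Huv Hvu y Hy; apply/PsiP; split.
  by rewrite agrees_single (edge_flip Hs Huv Hy).
move=> z Hz.
have [w Hw] := P_nonempty f g v.
have Hzw : (f z <= f w)%R by move/PsiP: Hw => [_]; apply.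
apply: le_trans Hzw _; exact: connect_le Hs Hvu Hw Hy.
Qed.

Lemma scc_sub ell (R : realDomainType) (f : chrom ell -> R) g u x :
  all_order1_strict f g -> connect (EG f) u x -> connect (EG f) x u ->
  {subset P f g u <= P f g x}.
Proof.
move=> Hs /connectP [p Hp ->] {x}.
elim: p u Hp => [|c p IH] u /=; first by move=> _ y.
move=> /andP [Huc Hp] Hlu y Hy.
have Hcl : connect (EG f) c (last c p) by apply/connectP; exists p.
have Huc' : connect (EG f) u c by apply: connect1.
apply: (IH c Hp); first exact: connect_trans Hlu Huc'.
apply: (edge_sub Hs Huc) => //; exact: connect_trans Hcl Hlu.
Qed.

Lemma Psi_empty ell (R : realDomainType) (f : chrom ell -> R) g A :
  unique_global_maximizer f g -> (forall w, (A : assignment ell) w = None) ->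
  Psi f A = [set g].
Proof.
move=> Hg HA; have Hag : forall y, agrees A y.
  by move=> y; apply/forallP => v; rewrite HA.
apply/setP => y; rewrite [in RHS]inE; apply/PsiP/eqP.
  move=> [_ Hy]; apply/eqP; apply/negPn/negP => Hne.
  by have := Hg y Hne; rewrite ltNge Hy.
move=> ->; split => // z _; have [->|Hne] := eqVneq z g; first by [].
exact: ltW (Hg z Hne).
Qed.

Lemma scc_edge ell (R : realDomainType) (f : chrom ell -> R) g u x :
  unique_global_maximizer f g -> all_order1_strict f g ->
  connect (EG f) u x -> connect (EG f) x u -> x != u -> EG f u x.
Proof.
move=> Hg Hs Hux Hxu Hne.
have [y Hy] := P_nonempty f g u.
have Hyx := scc_sub Hs Hux Hxu Hy.
move/PsiP: (Hyx) => [Hagx _]; rewrite agrees_single in Hagx.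
rewrite /EG /epistasis; apply/and3P; split.
- by rewrite inE.
- by apply/set0Pn; exists u; rewrite inE.
apply/forall_inP => s; rewrite inE => /eqP -> {s}.
apply/existsP; exists (single u (~~ g u)); apply/andP; split.
  apply/eqP/setP => w; rewrite !inE ffunE; by case: (w == u).
rewrite [PsiAt f (remove_locus _ _) x]/PsiAt (@Psi_empty _ _ f g (remove_locus _ _)) //; last first.
  by move=> w; rewrite !ffunE; case: (w == u).
apply/negP => /eqP HE.
have : y x \in PsiAt f (single u (~~ g u)) x by apply/imsetP; exists y.
rewrite HE imset_set1 inE (eqP Hagx) => /eqP.
by case: (g x).
Qed.

End Helpers.

Theorem theorem8 (ell : nat) (R : realDomainType)
  (f : chrom ell -> R) (g : chrom ell) (k : nat) :
  (0 < ell)%N ->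
  unique_global_maximizer f g ->
  no_weak_epistasis f ->
  all_order1_strict f g ->
  max_in_degree f = k ->
  (forall u : 'I_ell, #|scc f u| <= k.+1)%N /\
  (decomposition_difficulty f <= k.+1)%N.
Proof.
move=> _ Hg _ Hs Hk.
have Hscc : forall u : 'I_ell, (#|scc f u| <= k.+1)%N.
  move=> u.
  have Hsub : scc f u :\ u \subset [set x | EG f x u].
    apply/subsetP => x; rewrite !inE => /andP [Hne /andP [Hux Hxu]].
    by apply: scc_edge Hg Hs Hxu Hux _; rewrite eq_sym.
  have Hdeg : (in_degree f u <= k)%N.
    by rewrite -Hk /max_in_degree; apply: (leq_bigmax u).
  rewrite -ltnS ltnS.
  have := subset_leq_card Hsub => Hc.
  have Hu : u \in scc f u by rewrite inE connect0.
  rewrite (cardsD1 u) Hu /= add1n ltnS.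
  apply: leq_trans Hdeg; apply: leq_trans Hc; rewrite /in_degree.
  by [].
split => //.
rewrite /decomposition_difficulty geq_max Hk leqnn andbT.
by apply/bigmax_leqP => u _; apply: Hscc.
Qed.
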